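(* Let $\mathcal{X}\in\mathbb{R}^{n_1\times\cdots\times n_D}$, and for each $d\in\{1,\dots,D\}$ let $\{w_{d,ij}\}_{1\le i<j\le n_d}$ be nonnegative weights such that for any pair $i<j$ in $\{1,\dots,n_d\}$ there is a sequence of indices $i\to k\to\cdots\to l\to j$ along which the weights $w_{d,ik},\dots,w_{d,lj}$ are all positive. For $\gamma\ge0$ let $$F_\gamma(\mathcal{U})=\frac12\|\mathcal{X}-\mathcal{U}\|_F^2+\gamma\sum_{d=1}^D\sum_{1\le i<j\le n_d} w_{d,ij}\,\|\mathcal{U}\times_d\Delta_{d,ij}\|_F .$$ Then for all sufficiently large $\gamma$, $F_\gamma$ is minimized by the grand mean tensor $\overline{\mathcal{X}}$, the tensor all of whose entries equal the average of all $n=\prod_d n_d$ entries of $\mathcal{X}$.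
   Context: Weights are symmetric ($w_{d,ij}=w_{d,ji}$). $\|\cdot\|_F$ is the Frobenius norm. $\mathcal{U}\times_d B$ is the $d$-mode product: $(\mathcal{U}\times_d B)_{i_1\ldots j\ldots i_D}=\sum_{i_d}u_{i_1\ldots i_D}b_{j i_d}$. $\Delta_{d,ij}=e_i^\top-e_j^\top\in\mathbb{R}^{1\times n_d}$, with $e_i$ the standard basis vectors of $\mathbb{R}^{n_d}$; so $\mathcal{U}\times_d\Delta_{d,ij}$ is the difference of the $i$th and $j$th mode-$d$ subarrays of $\mathcal{U}$. *)

(* Defs.v *)
From HB Require Import structures.
From mathcomp Require Import all_boot all_order all_algebra.
Set Implicit Arguments. Unset Strict Implicit. Unset Printing Implicit Defensive.
Import Order.TTheory GRing.Theory Num.Theory.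
Local Open Scope ring_scope.

Definition tidx (D : nat) (n : 'I_D -> nat) : finType :=
  {dffun forall d : 'I_D, 'I_(n d)}.

Definition tensor (R : Type) (D : nat) (n : 'I_D -> nat) := tidx n -> R.

Definition frob_diff2 (R : rcfType) D (n : 'I_D -> nat) (X U : tensor R n) : R :=
  \sum_(k : tidx n) (X k - U k) ^+ 2.

(* ||U x_d Delta_{d,ij}||_F : the Frobenius norm of the difference of the
   i-th and j-th mode-d subarrays of U.  A multi-index k with k d = i is paired
   with the unique k' agreeing with k outside mode d and with k' d = j. *)
Definition mode_diff_norm (R : rcfType) D (n : 'I_D -> nat) (U : tensor R n)
    (d : 'I_D) (i j : 'I_(n d)) : R :=
  Num.sqrt (\sum_(k : tidx n | k d == i)
             \sum_(k' : tidx n | (k' d == j) &&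
                      [forall d' : 'I_D, (d' != d) ==> (k' d' == k d')])
               (U k - U k') ^+ 2).

Definition Fgamma (R : rcfType) D (n : 'I_D -> nat)
    (w : forall d : 'I_D, 'I_(n d) -> 'I_(n d) -> R)
    (X : tensor R n) (gamma : R) (U : tensor R n) : R :=
  2^-1 * frob_diff2 X U +
  gamma * \sum_(d < D) \sum_(i : 'I_(n d)) \sum_(j : 'I_(n d) | (i < j)%N)
            w d i j * @mode_diff_norm R D n U d i j.

Definition grand_mean (R : rcfType) D (n : 'I_D -> nat) (X : tensor R n)
  : tensor R n :=
  fun _ => (\sum_(k : tidx n) X k) / (#|tidx n|%:R).

(* Main.v *)
Require Import Defs.
From HB Require Import structures.
From mathcomp Require Import all_boot all_order all_algebra.
From mathcomp Require Import ring lra.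
Import Order.TTheory GRing.Theory Num.Theory.
Local Open Scope ring_scope.


Section Aux.
Variables (R : rcfType) (D : nat) (n : 'I_D -> nat).
Variable w : forall d : 'I_D, 'I_(n d) -> 'I_(n d) -> R.
Hypothesis w_sym : forall d (i j : 'I_(n d)), w d i j = w d j i.
Hypothesis w_ge0 : forall d (i j : 'I_(n d)), (i < j)%N -> 0 <= w d i j.
Hypothesis w_conn : forall d (i j : 'I_(n d)), (i < j)%N ->
        connect [rel a b | 0 < w d a b] i j.
Set Implicit Arguments. Unset Strict Implicit.

Definition Pen (U : tensor R n) : R :=
  \sum_(d < D) \sum_(i : 'I_(n d)) \sum_(j : 'I_(n d) | (i < j)%N)
            w d i j * @mode_diff_norm R D n U d i j.

Lemma le_sum1 (I : finType) (P : pred I) (F : I -> R) i :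
  P i -> (forall j, P j -> 0 <= F j) -> F i <= \sum_(j | P j) F j.
Proof.
move=> Pi F0; rewrite (bigD1 i) //= lerDl sumr_ge0 // => j /andP[Pj _].
exact: F0.
Qed.

Lemma Pen_ge0 U : 0 <= Pen U.
Proof.
apply: sumr_ge0 => d _; apply: sumr_ge0 => i _; apply: sumr_ge0 => j ij.
by apply: mulr_ge0; [exact: w_ge0 | exact: sqrtr_ge0].
Qed.

Lemma Pen_term (U : tensor R n) (d : 'I_D) (i j : 'I_(n d)) : (i < j)%N ->
  w d i j * mode_diff_norm U i j <= Pen U.
Proof.
move=> ij.
have T0 : forall d' (i' j' : 'I_(n d')), (i' < j')%N ->
    0 <= w d' i' j' * mode_diff_norm U i' j'.
  by move=> d' i' j' h; apply: mulr_ge0; [exact: w_ge0 | exact: sqrtr_ge0].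
rewrite /Pen (bigD1 d) //= (bigD1 i) //= (bigD1 j) //= -!addrA lerDl.
rewrite !addr_ge0 //.
- by apply: sumr_ge0 => j' /andP[h _]; apply: T0.
- by apply: sumr_ge0 => i' _; apply: sumr_ge0 => j' h; apply: T0.
- by apply: sumr_ge0 => d' _; apply: sumr_ge0 => i' _; apply: sumr_ge0 => j' h; apply: T0.
Qed.

Lemma Pen_pair (U : tensor R n) d (k k' : tidx n) : (forall d', d' != d -> k' d' = k d') ->
  (k d < k' d)%N -> w d (k d) (k' d) * `|U k - U k'| <= Pen U.
Proof.
move=> agr lt; apply: le_trans _ (Pen_term U lt).
apply: ler_wpM2l; first exact: w_ge0.
rewrite /mode_diff_norm -sqrtr_sqr ler_sqrt; last first.
  by apply: sumr_ge0 => ? _; apply: sumr_ge0 => ? _; apply: sqr_ge0.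
rewrite (bigD1 k) //= (bigD1 k') /=; last first.
  rewrite eqxx /=; apply/forallP => d'; apply/implyP => nd.
  by rewrite agr.
rewrite -addrA lerDl addr_ge0 //.
  by apply: sumr_ge0 => ? _; apply: sqr_ge0.
by apply: sumr_ge0 => ? _; apply: sumr_ge0 => ? _; apply: sqr_ge0.
Qed.

Definition reach (k1 k2 : tidx n) := exists2 C : R, 0 <= C &
  forall U : tensor R n, `|U k1 - U k2| <= C * Pen U.

Lemma reach_refl (k : tidx n) : reach k k.
Proof. by exists 0 => // U; rewrite subrr normr0 mul0r. Qed.

Lemma reach_sym (k1 k2 : tidx n) : reach k1 k2 -> reach k2 k1.
Proof. by case=> C C0 H; exists C => // U; rewrite distrC. Qed.

Lemma reach_trans (k1 k2 k3 : tidx n) : reach k1 k2 -> reach k2 k3 -> reach k1 k3.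
Proof.
case=> C1 C10 H1 [C2 C20 H2]; exists (C1 + C2); first exact: addr_ge0.
move=> U; apply: le_trans (ler_distD (U k2) _ _) _.
by rewrite mulrDl lerD.
Qed.

Lemma reach_lt (k1 k2 : tidx n) d : (forall d', d' != d -> k2 d' = k1 d') ->
  (k1 d < k2 d)%N -> 0 < w d (k1 d) (k2 d) -> reach k1 k2.
Proof.
move=> agr lt wp; exists (w d (k1 d) (k2 d))^-1.
  by rewrite invr_ge0 ltW.
move=> U; rewrite -(ler_pM2l wp) mulrA mulrV ?unitfE ?gt_eqF // mul1r.
exact: Pen_pair.
Qed.

Lemma reach_edge (k1 k2 : tidx n) d : (forall d', d' != d -> k2 d' = k1 d') ->
  0 < w d (k1 d) (k2 d) -> reach k1 k2.
Proof.
move=> agr wp; case: (ltngtP (k1 d) (k2 d)) => h.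
- exact: reach_lt h wp.
- apply: reach_sym; apply: (reach_lt (d := d)) => //.
    by move=> d' nd; rewrite agr.
  by rewrite w_sym.
- have -> : k2 = k1.
    apply/ffunP => d'; case: (eqVneq d' d) => [->|nd]; last exact: agr.
    by apply: val_inj.
  exact: reach_refl.
Qed.

Definition upd (k : tidx n) (d : 'I_D) (b : 'I_(n d)) : tidx n :=
  @finfun _ (fun d => 'I_(n d)) (fun d' =>
    match d =P d' with
    | ReflectT e => eq_rect d (fun x => 'I_(n x)) b d' e
    | ReflectF _ => k d'
    end).
Arguments upd k d b : clear implicits.

Lemma upd_same (k : tidx n) d (b : 'I_(n d)) : upd k d b d = b.
Proof.
rewrite /upd ffunE; case: eqP => [e|]; last by [].
by rewrite (eq_axiomK e).
Qed.

Lemma upd_other (k : tidx n) d (b : 'I_(n d)) d' : d' != d -> upd k d b d' = k d'.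
Proof.
move=> nd; rewrite /upd ffunE; case: eqP => // e.
by rewrite -e eqxx in nd.
Qed.

Lemma upd_eq (k1 k2 : tidx n) d : (forall d', d' != d -> k2 d' = k1 d') ->
  upd k1 d (k2 d) = k2.
Proof.
move=> agr; apply/ffunP => d'; case: (eqVneq d' d) => [->|nd].
  by rewrite upd_same.
by rewrite upd_other // agr.
Qed.

Lemma reach_line (k1 k2 : tidx n) d : (forall d', d' != d -> k2 d' = k1 d') ->
  connect [rel a b | 0 < w d a b] (k1 d) (k2 d) -> reach k1 k2.
Proof.
move=> agr /connectP [p pth lastp].
have H : forall a p, path [rel a b | 0 < w d a b] a p ->
    reach (upd k1 d a) (upd k1 d (last a p)).
  move=> a p0; elim: p0 a => [|c p0 IH] a /=; first by move=> _; apply: reach_refl.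
  move=> /andP[eac pc]; apply: reach_trans (IH c pc).
  apply: (reach_edge (d := d)).
    by move=> d' nd; rewrite !upd_other.
  by rewrite !upd_same.
have := H _ _ pth; rewrite -lastp (upd_eq agr).
by rewrite (upd_eq (k1 := k1) (k2 := k1) (d := d)).
Qed.

Lemma reach_agree (k1 k2 : tidx n) d : (forall d', d' != d -> k2 d' = k1 d') ->
  reach k1 k2.
Proof.
move=> agr; case: (ltngtP (k1 d) (k2 d)) => h.
- exact: reach_line agr (w_conn _ _ _ h).
- apply: reach_sym; apply: (reach_line (d := d) _ (w_conn _ _ _ h)).
  by move=> d' nd; rewrite agr.
- have -> : k2 = k1.
    apply/ffunP => d'; case: (eqVneq d' d) => [->|nd]; last exact: agr.
    by apply: val_inj.
  exact: reach_refl.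
Qed.

Lemma reach_all (k0 k : tidx n) : reach k0 k.
Proof.
pose mix m : tidx n := @finfun _ (fun d => 'I_(n d))
   (fun d => if (d < m)%N then k d else k0 d).
have H : forall m, (m <= D)%N -> reach k0 (mix m).
  elim => [|m IH] hm.
    have -> : mix 0%N = k0 by apply/ffunP => d; rewrite ffunE.
    exact: reach_refl.
  apply: reach_trans (IH (ltnW hm)) _.
  apply: (reach_agree (d := Ordinal hm)) => d' nd.
  rewrite !ffunE ltnS leq_eqVlt.
  have -> : (val d' == m) = false.
    apply/negbTE; apply: contra nd => /eqP e; apply/eqP; exact: val_inj.
  by [].
have := H D (leqnn D).
have -> : mix D = k by apply/ffunP => d; rewrite ffunE ltn_ord.
by [].
Qed.

Lemma reach_unif (k0 : tidx n) : exists2 C : R, 0 <= C &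
  forall k U, `|U k - U k0| <= C * Pen U.
Proof.
have : forall s : seq (tidx n), exists2 C : R, 0 <= C &
    forall k, k \in s -> forall U, `|U k - U k0| <= C * Pen U.
  elim => [|k s [C C0 HC]]; first by exists 0.
  case: (reach_all k k0) => C1 C10 H1.
  exists (C + C1); first exact: addr_ge0.
  move=> k'; rewrite inE => /orP[/eqP ->|ks] U.
    apply: le_trans (H1 U) _; apply: ler_wpM2r; first exact: Pen_ge0.
    by rewrite lerDr.
  apply: le_trans (HC k' ks U) _; apply: ler_wpM2r; first exact: Pen_ge0.
  by rewrite lerDl.
case/(_ (enum (tidx n))) => C C0 HC; exists C => // k U.
by apply: HC; rewrite mem_enum.
Qed.

Lemma bound (X : tensor R n) : exists2 C : R, 0 <= C &
  forall U : tensor R n, \sum_k (X k - grand_mean X k) * (U k - grand_mean X k)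
     <= C * Pen U.
Proof.
set m := grand_mean X.
case: (pickP (fun _ : tidx n => true)) => [k0 _ | empty]; last first.
  by exists 0 => // U; rewrite big_pred0 // mul0r.
have sum0 : \sum_k (X k - m k) = 0.
  rewrite sumrB sumr_const /m /grand_mean -[X in _ - X]mulr_natr -/(#|tidx n|) divfK ?subrr //.
  by rewrite pnatr_eq0 -lt0n; apply/card_gt0P; exists k0.
case: (reach_unif k0) => C C0 HC.
exists ((\sum_k `|X k - m k|) * C).
  by apply: mulr_ge0 => //; apply: sumr_ge0 => ? _.
move=> U.
have -> : \sum_k (X k - m k) * (U k - m k) =
   \sum_k (X k - m k) * (U k - U k0) + (\sum_k (X k - m k)) * (U k0 - m k0).
  rewrite mulr_suml -big_split /=; apply: eq_bigr => k _.
  by rewrite /m /grand_mean -mulrDr addrA subrK.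
rewrite sum0 mul0r addr0 -mulrA mulr_suml.
apply: ler_sum => k _.
apply: le_trans (ler_norm _) _; rewrite normrM.
by apply: ler_wpM2l => //; rewrite distrC.
Qed.

End Aux.

Theorem proposition4p3 (R : rcfType) (D : nat) (n : 'I_D -> nat)
    (X : tensor R n) (w : forall d : 'I_D, 'I_(n d) -> 'I_(n d) -> R)
    (w_sym : forall d (i j : 'I_(n d)), w d i j = w d j i)
    (w_ge0 : forall d (i j : 'I_(n d)), (i < j)%N -> 0 <= w d i j)
    (w_conn : forall d (i j : 'I_(n d)), (i < j)%N ->
        connect [rel a b | 0 < w d a b] i j) :
  exists gamma0 : R, forall gamma : R, gamma0 <= gamma ->
    forall U : tensor R n, Fgamma w X gamma (grand_mean X) <= Fgamma w X gamma U.
Proof.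
case: (bound w_sym w_ge0 w_conn X) => C C0 HC.
exists C => gamma hg U.
set m := grand_mean X.
change (2^-1 * frob_diff2 X m + gamma * Pen w m <= 2^-1 * frob_diff2 X U + gamma * Pen w U).
have -> : Pen w m = 0.
  rewrite /Pen big1 // => d _; rewrite big1 // => i _; rewrite big1 // => j _.
  rewrite /mode_diff_norm big1 ?sqrtr0 ?mulr0 // => k _.
  by rewrite big1 // => k' _; rewrite /m /grand_mean subrr expr2 mulr0.
have -> : frob_diff2 X U = frob_diff2 X m + \sum_k (U k - m k) ^+ 2
     - 2 * \sum_k (X k - m k) * (U k - m k).
  rewrite /frob_diff2 mulr_sumr -big_split -sumrB /=; apply: eq_bigr => k _.
  ring.
have Q0 : 0 <= \sum_k (U k - m k) ^+ 2 by apply: sumr_ge0 => ? _; apply: sqr_ge0.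
have P0 := Pen_ge0 w_ge0 U.
have := HC U; rewrite -/m => HS.
have : C * Pen w U <= gamma * Pen w U by apply: ler_wpM2r.
lra.
Qed.
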